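(* Let $C$ be a ring, $J\subset C$ a finitely generated prime ideal, $B=C/J$, and $b\in B$ an element such that the induced morphism $\operatorname{Spec}(B_b)\to\operatorname{Spec}(C)$ is an open immersion. Then there exist an integer $n>0$ and an element $c\in C$ lifting $b^n$ such that $J=\operatorname{Ann}_C(c)$. *)

(* Defs.v *)
(* commutative rings (possibly trivial: comPzRingType),
   ideals as Prop-valued predicates, prime spectra as sets of prime ideals. *)
From HB Require Import structures.
From mathcomp Require Import all_boot all_order all_algebra.
Set Implicit Arguments. Unset Strict Implicit. Unset Printing Implicit Defensive.
Import GRing.Theory.
Local Open Scope ring_scope.

Section Defs.
Variable R : comPzRingType.

Definition is_ideal (I : R -> Prop) : Prop :=
  [/\ I 0, (forall x y, I x -> I y -> I (x + y)) & (forall a x, I x -> I (a * x))].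

Definition is_prime_ideal (I : R -> Prop) : Prop :=
  [/\ is_ideal I, ~ I 1 & (forall x y, I (x * y) -> I x \/ I y)].

Definition fin_gen_ideal (I : R -> Prop) : Prop :=
  exists (n : nat) (g : 'I_n -> R),
    forall x, I x <-> exists a : 'I_n -> R, x = \sum_(i < n) a i * g i.
End Defs.

Definition is_quotient_map (C B : comPzRingType) (pi : {rmorphism C -> B})
    (J : C -> Prop) : Prop :=
  (forall y : B, exists x : C, pi x = y) /\ (forall x, pi x = 0 <-> J x).

(* phi : B -> A exhibits A as the localization B_b (elementwise characterization:
   phi b invertible, kernel = b-power torsion, every element is phi x / phi b^n) *)
Definition is_localization_at (B A : comPzRingType) (phi : {rmorphism B -> A})
    (b : B) : Prop :=
  [/\ exists u : A, phi b * u = 1,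
      (forall x, phi x = 0 <-> exists n : nat, b ^+ n * x = 0)
    & (forall a : A, exists (x : B) (n : nat), a * phi b ^+ n = phi x)].

(* Spec(psi) : Spec A -> Spec C, q |-> psi^{-1}(q), is an open immersion:
   (1) injective, (2) its image is Zariski-open in Spec C,
   (3) it maps Zariski-open sets of Spec A onto relatively open subsets of the
   image (so it is a homeomorphism onto an open subset; continuity is automatic),
   (4) for every prime q of A, the induced map on stalks
       C_{psi^{-1} q} -> A_q is an isomorphism (injective and surjective).
   Zariski opens are the unions of basic opens D(f) = {p | f \notin p}. *)
Definition spec_open_immersion (C A : comPzRingType) (psi : C -> A) : Prop :=
  [/\
      (forall q1 q2 : A -> Prop, is_prime_ideal q1 -> is_prime_ideal q2 ->
         (forall x, q1 (psi x) <-> q2 (psi x)) -> forall a, q1 a <-> q2 a),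
      (exists S : C -> Prop, forall p : C -> Prop, is_prime_ideal p ->
         ((exists q : A -> Prop, is_prime_ideal q /\ forall x, p x <-> q (psi x))
          <-> exists f, S f /\ ~ p f)),
      (forall T : A -> Prop, exists S : C -> Prop,
         forall q : A -> Prop, is_prime_ideal q ->
           ((exists a, T a /\ ~ q a) <-> exists f, S f /\ ~ q (psi f))),
      (forall q : A -> Prop, is_prime_ideal q -> forall x : C,
         (exists t : A, ~ q t /\ psi x * t = 0) ->
         exists s : C, ~ q (psi s) /\ x * s = 0)
    &
      (forall q : A -> Prop, is_prime_ideal q -> forall a : A,
         exists (x s : C) (t : A), [/\ ~ q (psi s), ~ q t &
                                      t * (psi s * a - psi x) = 0])].

(* Main.v *)
Require Import Defs.
From HB Require Import structures.
From mathcomp Require Import all_boot all_order all_algebra.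
From mathcomp Require Import boolp classical_sets.
Import GRing.Theory.
Local Open Scope ring_scope.

Lemma max_ideal (R : comPzRingType) (L : R -> Prop) :
  is_ideal L -> ~ L 1 -> exists q, is_prime_ideal q /\ (forall x, L x -> q x).
Proof.
move=> [L0 LD LM] L1.
pose P (X : set R) := X = set0 \/ (is_ideal X /\ (forall x, L x -> X x) /\ ~ X 1).
have [M [PM Mmax]] : exists M, P M /\ forall B, (M `<` B)%classic -> ~ P B.
  apply: Zorn_bigcup => F FP Ftot.
  have [[X FX Xn0]|allz] := pselect (exists2 X, F X & X <> set0); last first.
    left; apply/seteqP; split => x // [X FX Xx]; exfalso; apply: allz.
    by exists X => // X0; rewrite X0 in Xx.
  have Fi : forall Y, F Y -> forall y, Y y -> [/\ is_ideal Y, (forall x, L x -> Y x) & ~ Y 1].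
    move=> Y FY y Yy; case: (FP Y FY) => [Y0|[? [? ?]]]; last by split.
    by rewrite Y0 in Yy.
  have : exists x, X x.
    apply: contra_notP Xn0 => nx; apply/seteqP; split => x // Xx.
    by exfalso; apply: nx; exists x.
  move=> [x0 Xx0]; have [[XI0 XID XIM] XL X1] := Fi X FX x0 Xx0.
  right; split; last split.
  - split.
    + by exists X.
    + move=> x y [Y FY Yx] [Z FZ Zy].
      case: (Ftot Y Z FY FZ) => [YZ|ZY].
      * have [[_ ZD _] _ _] := Fi Z FZ y Zy.
        by exists Z => //; apply: ZD => //; apply: YZ.
      * have [[_ YD _] _ _] := Fi Y FY x Yx.
        by exists Y => //; apply: YD => //; apply: ZY.
    + move=> a x [Y FY Yx]; have [[_ _ YM] _ _] := Fi Y FY x Yx.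
      by exists Y => //; apply: YM.
  - by move=> x Lx; exists X => //; apply: XL.
  - by move=> [Y FY Y1]; have [_ _ []] := Fi Y FY 1 Y1.
case: PM => [M0|[[M0 MD MM] [ML M1]]].
  exfalso; apply: (Mmax L); last by right; split.
  rewrite M0; split => // /(_ 0 L0) //.
exists M; split; last exact: ML.
split; [by split | exact: M1 | ].
move=> x y Mxy; apply: contrapT => /not_orP[nMx nMy]; apply: M1.
pose Ix (z : R) (X : set R) := fun w => exists m r, X m /\ w = m + r * z.
have gen : forall z, ~ M z -> exists m r, M m /\ 1 = m + r * z.
  move=> z nMz; apply: contrapT => n1.
  have PI : P (Ix z M).
    right; split; last split.
    - split.
      + by exists 0, 0; rewrite mul0r addr0.
      + move=> a c [m1 [r1 [Mm1 ->]]] [m2 [r2 [Mm2 ->]]].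
        exists (m1 + m2), (r1 + r2); split; first exact: (MD).
        by rewrite mulrDl addrACA.
      + move=> a c [m1 [r1 [Mm1 ->]]]; exists (a * m1), (a * r1); split.
          exact: (MM).
        by rewrite mulrDr mulrA.
    - by move=> w Lw; exists w, 0; rewrite mul0r addr0; split => //; apply: ML.
    - by move=> [m [r [Mm E]]]; apply: n1; exists m, r.
  have sub : (M `<=` Ix z M)%classic.
    by move=> w Mw; exists w, 0; rewrite mul0r addr0.
  apply: (Mmax (Ix z M)) PI; split => // sub2.
  by apply: nMz; apply: sub2; exists 0, 1; rewrite mul1r add0r.
have [m1 [r1 [Mm1 E1]]] := gen x nMx.
have [m2 [r2 [Mm2 E2]]] := gen y nMy.
have -> : (1 : R) = (m1 + r1 * x) * (m2 + r2 * y) by rewrite -E1 -E2 mulr1.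
rewrite mulrDl !mulrDr; apply: (MD); first apply: (MD).
- by rewrite mulrC; apply: (MM).
- by rewrite mulrC; apply: (MM).
apply: (MD); first by apply: (MM).
by rewrite mulrACA; apply: (MM).
Qed.

Theorem lemma2p7 (C B A : comPzRingType) (J : C -> Prop)
    (pi : {rmorphism C -> B}) (phi : {rmorphism B -> A}) (b : B) :
  is_prime_ideal J -> fin_gen_ideal J ->
  is_quotient_map pi J ->
  is_localization_at phi b ->
  b != 0 ->
  spec_open_immersion (fun x : C => phi (pi x)) ->
  exists n : nat, (0 < n)%N /\
    exists c : C, pi c = b ^+ n /\ (forall x : C, J x <-> x * c = 0).
Proof.
move=> [[J0 JD JM] J1 Jp] [n [g Hg]] [pis piker] [[u Hu] Hker Hloc] bnz
  [_ _ _ Hinj _].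
have Bdom : forall x y : B, x * y = 0 -> x = 0 \/ y = 0.
  move=> x y; have [x' <-] := pis x; have [y' <-] := pis y.
  rewrite -rmorphM => /piker /Jp [/piker|/piker]; by [left|right].
have bn_nz : forall k, b ^+ k != 0.
  elim=> [|k IH]; first by rewrite expr0; apply/eqP => /eqP; rewrite -(rmorph1 pi) => /eqP/piker.
  rewrite exprS; apply/eqP => /Bdom [/eqP|/eqP]; by [rewrite (negbTE bnz) | rewrite (negbTE IH)].
have [be pbe] := pis b.
pose psi := fun x : C => phi (pi x).
have psiM : forall x y, psi (x * y) = psi x * psi y by move=> x y; rewrite /psi !rmorphM.
have psiD : forall x y, psi (x + y) = psi x + psi y by move=> x y; rewrite /psi !rmorphD.
have psiX : forall x k, psi (x ^+ k) = psi x ^+ k by move=> x k; rewrite /psi !rmorphXn.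
have psibe : psi be = phi b by rewrite /psi pbe.
pose AnnJ (s : C) := forall x, J x -> x * s = 0.
have gJ : forall i, J (g i).
  move=> i; apply/Hg; exists (fun j => if j == i then 1 else 0).
  rewrite (bigD1 i) //= eqxx mul1r big1 ?addr0 // => j /negbTE ->; by rewrite mul0r.
have key : forall q : A -> Prop, is_prime_ideal q -> exists s, AnnJ s /\ ~ q (psi s).
  move=> q [qI q1 qp].
  have ex : forall i, exists s, ~ q (psi s) /\ g i * s = 0.
    move=> i; apply: (Hinj q (And3 qI q1 qp)); exists 1; split => //.
    by rewrite mulr1; apply/eqP; rewrite /psi (proj2 (piker _) (gJ i)) rmorph0.
  have [si Hsi] := fin_all_exists ex.
  exists (\prod_i si i); split.
    move=> x /Hg [a ->]; rewrite mulr_suml big1 // => i _.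
    by rewrite (bigD1 i) //= mulrA -[a i * g i * si i]mulrA (proj2 (Hsi i)) mulr0 mul0r.
  rewrite /psi !rmorph_prod; apply: (big_ind (fun a => ~ q a)) => //.
    by move=> a c na nc /qp [].
  by move=> i _; case: (Hsi i).
pose L := fun a : A => exists s k, AnnJ s /\ a * phi b ^+ k = psi s.
have L1 : L 1.
  apply: contrapT => nL1.
  have [q [qP qL]] : exists q, is_prime_ideal q /\ (forall x, L x -> q x).
    apply: max_ideal => //; split.
    - exists 0, 0%N; split; first by move=> x _; rewrite mulr0.
      by rewrite mul0r /psi !rmorph0.
    - move=> a c [s [k [As Ea]]] [t [l [At Ec]]].
      exists (s * be ^+ l + t * be ^+ k), (k + l)%N; split.
        by move=> x Jx; rewrite mulrDr !mulrA (As x Jx) (At x Jx) !mul0r addr0.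
      rewrite psiD !psiM !psiX psibe -Ea -Ec exprD mulrDl; congr (_ + _).
        by rewrite mulrA.
      by rewrite [phi b ^+ k * _]mulrC mulrA.
    - move=> a c [s [k [As Ec]]].
      have [y [l Ey]] := Hloc a; have [y' Ey'] := pis y.
      exists (y' * s), (l + k)%N; split.
        by move=> x Jx; rewrite mulrCA (As x Jx) mulr0.
      by rewrite psiM -Ec /psi Ey' -Ey exprD mulrACA.
  have [s [As nq]] := key q qP; apply: nq; apply: qL.
  by exists s, 0%N; split => //; rewrite expr0 mulr1.
have [s [k [As Es]]] := L1.
have pis_eq : pi s = b ^+ k.
  move: Es; rewrite mul1r /psi -rmorphXn => /eqP; rewrite -subr_eq0 -rmorphB => /eqP.
  move/Hker => [l /Bdom [/eqP|/eqP]]; first by rewrite (negbTE (bn_nz l)).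
  by rewrite subr_eq0 => /eqP ->.
exists k.+1; split => //; exists (s * be); split; first by rewrite rmorphM pis_eq pbe exprSr.
move=> x; split; first by move=> Jx; rewrite mulrA (As x Jx) mul0r.
move=> E; have : J (x * (s * be)) by rewrite E; apply: J0.
case/Jp => //; move/piker; rewrite rmorphM pis_eq pbe -exprSr => /eqP.
by rewrite (negbTE (bn_nz _)).
Qed.
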